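(* Let $n\ge1$, $\vec m=(m_1,\dots,m_n)\in\mathbb{N}^n$ and $1\le j\le n$. For every $w\in\mathbb{Q}_{\ge0}$, $$N_{\Delta(G^j_{n,\vec m})}(w)=2\,N_{\Delta(G^{j-1}_{n,\vec m})}(w)-N_{\Delta(G^{j-1}_{n-1,(m_1,\dots,\widehat{m_j},\dots,m_n)})}(w),$$ where the last polytope lives in $\mathbb{R}^{n-1}$ (coordinates $x_1,\dots,\widehat{x_j},\dots,x_n$), and for $n=1$ it is the zero-dimensional polytope $\{0\}\subset\mathbb{R}^0$, for which $N(w)=1$ if $w=0$ and $N(w)=0$ otherwise.
   Context: For $\vec m\in\mathbb N^n$ and $0\le j\le n$, $G^j_{n,\vec m}=x_1^{m_1}+\dots+x_n^{m_n}+x_1^{-m_1}+\dots+x_j^{-m_j}$, and $\Delta(G^j_{n,\vec m})$ is its Newton polytope, the convex hull of $\vec 0$, $m_ie_i$ ($1\le i\le n$) and $-m_ie_i$ ($1\le i\le j$). For a polytope $\Delta\subset\mathbb{R}^n$ containing $\vec0$, the weight $w_\Delta(u)$ of $u\in\mathbb{Q}^n$ is the smallest $c\in\mathbb{Q}_{\ge0}$ with $u\in c\Delta$ ($\infty$ if none), and $N_\Delta(w)=\#\{u\in\mathbb{Z}^n: w_\Delta(u)=w\}$. *)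

(* Defs.v *)
From HB Require Import structures.
From mathcomp Require Import all_boot all_order all_algebra.
Set Implicit Arguments. Unset Strict Implicit. Unset Printing Implicit Defensive.
Import Order.TTheory GRing.Theory Num.Theory.
Local Open Scope ring_scope.

Definition qvec (n : nat) := {ffun 'I_n -> rat}.
Definition zvec (n : nat) := {ffun 'I_n -> int}.

Definition zvec_to_q (n : nat) (u : zvec n) : qvec n := [ffun i => (u i)%:~R].

(* Vertex list of Delta(G^j_{n,m}): 0, m_i e_i (all i), -m_i e_i (the first j
   indices, i.e. 0-based i < j). *)
Definition Gverts (n : nat) (m : 'I_n -> nat) (j : nat) : seq (qvec n) :=
  [ffun _ => 0]
  :: [seq [ffun k => if k == i then (m i)%:R else 0] | i <- enum 'I_n]
  ++ [seq [ffun k => if k == i then - (m i)%:R else 0] | i <- enum 'I_n & (val i < j)%N].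

Definition in_dilate (n : nat) (V : seq (qvec n)) (c : rat) (x : qvec n) : Prop :=
  exists lam : 'I_(size V) -> rat,
    (forall k, 0 <= lam k) /\ \sum_k lam k = c /\
    (forall t, \sum_k lam k * (nth [ffun _ => 0] V k) t = x t).

Definition is_weight (n : nat) (V : seq (qvec n)) (x : qvec n) (c : rat) : Prop :=
  0 <= c /\ in_dilate V c x /\
  (forall c', 0 <= c' -> in_dilate V c' x -> c <= c').

Definition Ncard (n : nat) (V : seq (qvec n)) (w : rat) (k : nat) : Prop :=
  exists s : seq (zvec n), uniq s /\ size s = k /\
    (forall u, u \in s <-> is_weight V (zvec_to_q u) w).

(* Main.v *)
Require Import Defs.
From HB Require Import structures.
From mathcomp Require Import all_boot all_order all_algebra zify.
Set Implicit Arguments. Unset Strict Implicit. Unset Printing Implicit Defensive.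
Import Order.TTheory GRing.Theory Num.Theory.
Local Open Scope ring_scope.

Section Dil.
Variables (n : nat) (V : seq (qvec n)).

Lemma dil_ext c x (y : qvec n) : in_dilate V c x -> (forall t, x t = y t) -> in_dilate V c y.
Proof. by move=> [l [h1 [h2 h3]]] e; exists l; do 2!split=> //; move=> t; rewrite -e. Qed.

Lemma dil_add c1 c2 x1 x2 (x : qvec n) : in_dilate V c1 x1 -> in_dilate V c2 x2 ->
  (forall t, x t = x1 t + x2 t) -> in_dilate V (c1 + c2) x.
Proof.
move=> [l1 [p1 [s1 e1]]] [l2 [p2 [s2 e2]]] e.
exists (fun k => l1 k + l2 k); split; first by move=> k; rewrite addr_ge0.
split; first by rewrite big_split /= s1 s2.
move=> t; rewrite e -e1 -e2 -big_split /=; by apply: eq_bigr => k _; rewrite mulrDl.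
Qed.

Lemma dil_scale a c y (x : qvec n) : 0 <= a -> in_dilate V c y ->
  (forall t, x t = a * y t) -> in_dilate V (a * c) x.
Proof.
move=> a0 [l [p [s e]]] ex.
exists (fun k => a * l k); split; first by move=> k; rewrite mulr_ge0.
split; first by rewrite -mulr_sumr s.
move=> t; rewrite ex -e mulr_sumr; by apply: eq_bigr => k _; rewrite mulrA.
Qed.

Lemma dil_vert v : v \in V -> in_dilate V 1 v.
Proof.
move=> vV; have hi : (index v V < size V)%N by rewrite index_mem.
exists (fun k : 'I_(size V) => if k == Ordinal hi then 1 else 0); split.
  by move=> k; case: ifP.
split.
  by rewrite -big_mkcond /= big_pred1_eq.
move=> t.
rewrite (eq_bigr (fun k : 'I_(size V) => if k == Ordinal hi then (nth [ffun _ => 0] V k) t else 0)).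
  by rewrite -big_mkcond /= big_pred1_eq /= nth_index.
by move=> k _; case: ifP; rewrite ?mul1r ?mul0r.
Qed.

Lemma dil_sum (I : eqType) (s : seq I) (c : I -> rat) (y : I -> qvec n) (x : qvec n) :
  (forall i, i \in s -> in_dilate V (c i) (y i)) ->
  (forall t, x t = \sum_(i <- s) y i t) -> in_dilate V (\sum_(i <- s) c i) x.
Proof.
elim: s x => [|a s IH] x h e.
  exists (fun _ => 0); split=> //; split; first by rewrite big_nil big1.
  by move=> t; rewrite e big_nil big1 // => k _; rewrite mul0r.
rewrite big_cons; apply: (dil_add (x1 := y a) (x2 := [ffun t => \sum_(i <- s) y i t])).
- by apply: h; rewrite mem_head.
- apply: IH => [i hi|t]; last by rewrite ffunE.
  by apply: h; rewrite in_cons hi orbT.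
- by move=> t; rewrite e big_cons ffunE.
Qed.
End Dil.

Definition wsum n (m : 'I_n -> nat) (x : qvec n) : rat := \sum_i `|x i| / (m i)%:R.
Definition okb n (m : 'I_n -> nat) (j : nat) (x : qvec n) : bool :=
  [forall i, ((x i != 0) ==> (0 < m i)%N) && ((x i < 0) ==> (val i < j)%N)].

Lemma unit_sum n (m : 'I_n -> nat) (i : 'I_n) (a : rat) :
  `|a| = (m i)%:R ->
  \sum_t `|(if t == i then a else 0)| / (m t)%:R <= 1.
Proof.
move=> ha.
rewrite (eq_bigr (fun t => if t == i then `|a| / (m i)%:R else 0)); last first.
  by move=> t _; case: eqP => [->|]; rewrite ?normr0 ?mul0r.
rewrite -big_mkcond /= big_pred1_eq ha.
case: (m i) => [|k]; first by rewrite mul0r.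
by rewrite divff // pnatr_eq0.
Qed.

Lemma vert_props n (m : 'I_n -> nat) j v : v \in Gverts m j ->
  [/\ forall t, m t = 0%N -> v t = 0, forall t, (j <= val t)%N -> 0 <= v t & wsum m v <= 1].
Proof.
rewrite /Gverts in_cons mem_cat => /orP [/eqP ->|/orP [/mapP [i _ ->]|/mapP [i]]].
- split=> [t _|t _|]; rewrite ?ffunE //.
  by rewrite /wsum big1 // => t _; rewrite ffunE normr0 mul0r.
- split=> [t|t _|]; rewrite ?ffunE.
  + by case: eqP => // -> ->.
  + by case: eqP.
  + rewrite /wsum (eq_bigr (fun t => `|(if t == i then ((m i)%:R : rat) else 0)| / (m t)%:R)).
      by apply: unit_sum; rewrite normr_nat.
    by move=> t _; rewrite ffunE.
- rewrite mem_filter => /andP [hij _] ->.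
  split=> [t|t ht|]; rewrite ?ffunE.
  + by case: eqP => // -> ->; rewrite oppr0.
  + by case: eqP => // eti; move: ht; rewrite eti leqNgt hij.
  + rewrite /wsum (eq_bigr (fun t => `|(if t == i then - ((m i)%:R : rat) else 0)| / (m t)%:R)).
      by apply: unit_sum; rewrite normrN normr_nat.
    by move=> t _; rewrite ffunE.
Qed.

Lemma sum_delta n (f : 'I_n -> rat) t :
  \sum_i (if t == i then f i else 0) = f t.
Proof.
rewrite (eq_bigr (fun i => if i == t then f i else 0)); last by move=> i _; rewrite eq_sym.
by rewrite -big_mkcond big_pred1_eq.
Qed.

Lemma zero_vert n (m : 'I_n -> nat) j : [ffun _ => 0] \in Gverts m j.
Proof. by rewrite /Gverts mem_head. Qed.

Lemma dil_iff n (m : 'I_n -> nat) j c x :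
  in_dilate (Gverts m j) c x <-> [/\ 0 <= c, okb m j x & wsum m x <= c].
Proof.
split.
  move=> [l [lp [ls lx]]].
  have vV : forall k : 'I_(size (Gverts m j)), nth [ffun=> 0] (Gverts m j) k \in Gverts m j.
    by move=> k; apply: mem_nth.
  split.
  - by rewrite -ls; apply: sumr_ge0.
  - apply/forallP => i; apply/andP; split; apply/implyP.
    + apply: contraR; rewrite -leqNgt leqn0 => /eqP mi0.
      rewrite -lx big1 // => k _.
      by case: (vert_props (vV k)) => h _ _; rewrite h // mulr0.
    + move=> xi; rewrite ltnNge; apply/negP => hji.
      move: xi; rewrite -lx ltNge sumr_ge0 // => k _.
      by case: (vert_props (vV k)) => _ h _; rewrite mulr_ge0 // h.
  - rewrite /wsum.
    apply: (@le_trans _ _ (\sum_t \sum_k l k * (`|nth [ffun=> 0] (Gverts m j) k t| / (m t)%:R))).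
      apply: ler_sum => t _; rewrite -lx.
      rewrite [leRHS](eq_bigr (fun k => (l k * `|nth [ffun=> 0] (Gverts m j) k t|) / (m t)%:R)); last first.
        by move=> k _; rewrite mulrA.
      rewrite -mulr_suml ler_wpM2r ?invr_ge0 ?ler0n //.
      apply: le_trans (ler_norm_sum _ _ _) _.
      by apply: ler_sum => k _; rewrite normrM ger0_norm.
    rewrite exchange_big /= -ls; apply: ler_sum => k _.
    rewrite -mulr_sumr -[leRHS]mulr1 ler_wpM2l //.
    by case: (vert_props (vV k)).
move=> [c0 /forallP ok wle].
set V := Gverts m j.
have H1 : in_dilate V (wsum m x) [ffun t => \sum_i [ffun t => if t == i then x i else 0] t].
  apply: dil_sum => [i _|t]; last by rewrite ffunE.
  have /andP [/implyP hm /implyP hj] := ok i.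
  have [xi0|xi0] := eqVneq (x i) 0.
    rewrite xi0 normr0 mul0r -(mul0r 1).
    apply: (dil_scale (y := [ffun _ => 0])) => //; first by apply: dil_vert; apply: zero_vert.
    by move=> t; rewrite !ffunE mul0r; case: eqP => // ->.
  have mp := hm xi0.
  have mn0 : ((m i)%:R : rat) != 0 by rewrite pnatr_eq0 -lt0n.
  have [xn|xp] := ltP (x i) 0.
    rewrite ltr0_norm // -[_ / _]mulr1.
    apply: (dil_scale (y := [ffun k => if k == i then - (m i)%:R else 0])).
    - by rewrite mulr_ge0 // ?invr_ge0 ?ler0n // oppr_ge0 ltW.
    - apply: dil_vert; rewrite /V /Gverts in_cons mem_cat; apply/orP; right; apply/orP; right.
      by apply: map_f; rewrite mem_filter hj // mem_enum.
    move=> t; rewrite !ffunE; case: eqP => [_|]; last by rewrite mulr0.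
    by rewrite mulrN !mulNr opprK divfK.
  rewrite ger0_norm // -[_ / _]mulr1.
  apply: (dil_scale (y := [ffun k => if k == i then (m i)%:R else 0])).
  - by rewrite mulr_ge0 // ?invr_ge0 ?ler0n.
  - apply: dil_vert; rewrite /V /Gverts in_cons mem_cat; apply/orP; right; apply/orP; left.
    by apply: map_f; rewrite mem_enum.
  move=> t; rewrite !ffunE; case: eqP => [_|]; last by rewrite mulr0.
  by rewrite divfK.
have H2 : in_dilate V ((c - wsum m x) * 1) [ffun _ => 0].
  apply: (dil_scale (y := [ffun _ => 0])); first by rewrite subr_ge0.
    by apply: dil_vert; apply: zero_vert.
  by move=> t; rewrite !ffunE mulr0.
have := dil_add H1 H2; rewrite mulr1 addrC subrK; apply.
by move=> t; rewrite !ffunE addr0 (eq_bigr (fun i => if t == i then x i else 0)) ?sum_delta // => i _; rewrite ffunE.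
Qed.

Lemma wsum_ge0 n (m : 'I_n -> nat) x : 0 <= wsum m x.
Proof. by apply: sumr_ge0 => i _; rewrite mulr_ge0 ?invr_ge0 ?ler0n. Qed.

Lemma weight_iff n (m : 'I_n -> nat) j x w :
  is_weight (Gverts m j) x w <-> okb m j x && (wsum m x == w).
Proof.
split.
  move=> [w0 [/dil_iff [_ ok le] mn]].
  rewrite ok /= eq_le le /=; apply: mn; first exact: wsum_ge0.
  by apply/dil_iff; split=> //; exact: wsum_ge0.
move=> /andP [ok /eqP <-]; split; first exact: wsum_ge0.
split; first by apply/dil_iff; split=> //; exact: wsum_ge0.
by move=> c' _ /dil_iff [].
Qed.

Lemma enum_box n (P : pred (zvec n)) (K : nat) :
  (forall u, P u -> forall i, `|u i| <= K%:Z) ->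
  exists s : seq (zvec n), uniq s /\ forall u, (u \in s) = P u.
Proof.
move=> hb.
pose toZ (f : {ffun 'I_n -> 'I_(K.*2.+1)}) : zvec n := [ffun i => (f i : nat)%:Z - K%:Z].
exists [seq toZ f | f <- enum {ffun 'I_n -> 'I_(K.*2.+1)} & P (toZ f)]; split.
  rewrite map_inj_uniq; first by rewrite filter_uniq // enum_uniq.
  move=> f g e.
  apply/ffunP => i; apply: val_inj => /=.
  have := congr1 (fun h : zvec n => h i) e; rewrite /toZ !ffunE => /addIr.
  by move=> [].
move=> u; apply/idP/idP.
  by move=> /mapP [f]; rewrite mem_filter => /andP [Pf _] ->.
move=> Pu.
have eu : toZ [ffun i => inord (absz (u i + K%:Z))] = u.
  apply/ffunP => i; rewrite /toZ !ffunE.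
  have := hb u Pu i; rewrite ler_norml => /andP [h1 h2].
  rewrite inordK; last by rewrite -addnn; move: (u i) h1 h2 => z h1 h2; lia.
  rewrite gez0_abs; last by move: (u i) h1 h2 => z h1 h2; lia.
  by rewrite addrK.
by rewrite -eu; apply: map_f; rewrite mem_filter mem_enum andbT eu.
Qed.

Lemma coord_bound n (m : 'I_n -> nat) j x i :
  okb m j x -> `|x i| <= wsum m x * (m i)%:R.
Proof.
move=> /forallP /(_ i) /andP [/implyP hm _].
have [xi0|xi0] := eqVneq (x i) 0; first by rewrite xi0 normr0 mulr_ge0 ?wsum_ge0 ?ler0n.
have mp : (0 < m i)%N by apply: hm.
rewrite -ler_pdivrMr ?ltr0n // /wsum (bigD1 i) //= lerDl.
by apply: sumr_ge0 => k _; rewrite mulr_ge0 ?invr_ge0 ?ler0n.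
Qed.

Definition Pw n (m : 'I_n -> nat) (j : nat) (w : rat) (u : zvec n) : bool :=
  okb m j (zvec_to_q u) && (wsum m (zvec_to_q u) == w).

Lemma Pw_enum n (m : 'I_n -> nat) j w : 0 <= w ->
  exists s : seq (zvec n), uniq s /\ forall u, (u \in s) = Pw m j w u.
Proof.
move=> w0; apply: (@enum_box _ _ (Num.Def.archi_bound w * \sum_i m i)%N).
move=> u /andP [ok /eqP ew] i.
rewrite -(ler_int rat) intr_norm.
have := coord_bound i ok; rewrite ew /zvec_to_q ffunE => h.
apply: (le_trans h).
rewrite -[X in _ <= X]/(_%:R) natrM. apply: le_trans (_ : w * (\sum_i m i)%:R <= _).
  by rewrite ler_wpM2l // ler_nat (bigD1 i) //= leq_addr.
by rewrite ler_wpM2r ?ler0n // ltW // archi_boundP.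
Qed.

Section Main.
Variables (n' : nat) (m : 'I_n'.+1 -> nat) (j : 'I_n'.+1) (w : rat).
Let m' := fun i : 'I_n' => m (lift j i).

Definition qflip (x : qvec n'.+1) : qvec n'.+1 := [ffun k => if k == j then - x k else x k].
Definition zflip (u : zvec n'.+1) : zvec n'.+1 := [ffun k => if k == j then - u k else u k].
Definition qres (x : qvec n'.+1) : qvec n' := [ffun i => x (lift j i)].
Definition zres (u : zvec n'.+1) : zvec n' := [ffun i => u (lift j i)].
Definition zext (v : zvec n') : zvec n'.+1 :=
  [ffun k => if unlift j k is Some i then v i else 0].

Lemma zflipK : involutive zflip.
Proof. by move=> u; apply/ffunP => k; rewrite !ffunE; case: eqP; rewrite ?opprK. Qed.

Lemma zflipq u : zvec_to_q (zflip u) = qflip (zvec_to_q u).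
Proof. by apply/ffunP => k; rewrite !ffunE; case: eqP; rewrite ?intrN. Qed.

Lemma zresq u : zvec_to_q (zres u) = qres (zvec_to_q u).
Proof. by apply/ffunP => k; rewrite !ffunE. Qed.

Lemma wsum_flip (x : qvec n'.+1) : wsum m (qflip x) = wsum m x.
Proof. by apply: eq_bigr => k _; rewrite ffunE; case: eqP; rewrite ?normrN. Qed.

Lemma ok_pos (x : qvec n'.+1) : 0 <= x j -> okb m (val j).+1 x = okb m (val j) x.
Proof.
move=> xj; apply: eq_forallb => i; congr (_ && _).
have [->|nij] := eqVneq i j; first by rewrite ltnSn ltnn ltNge xj.
have nij' : (val i == val j) = false by apply/eqP => e; move/eqP: nij; apply; apply: val_inj.
by rewrite ltnS leq_eqVlt nij'.
Qed.

Lemma ok_neg (x : qvec n'.+1) : x j < 0 -> okb m (val j).+1 x = okb m (val j) (qflip x).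
Proof.
move=> xj; apply: eq_forallb => i; rewrite ffunE.
have [->|nij] := eqVneq i j.
  by rewrite oppr_eq0 ltnSn oppr_lt0 (lt_gtF xj) !implybT.
have nij' : (val i == val j) = false by apply/eqP => e; move/eqP: nij; apply; apply: val_inj.
by rewrite [(_ < (val j).+1)%N]ltnS [(_ <= val j)%N]leq_eqVlt nij'.
Qed.

Lemma lift_lt (i : 'I_n') : (val (lift j i) < val j)%N = (val i < val j)%N.
Proof. by rewrite /= /bump; case: leqP => h; lia. Qed.

Lemma ok_res (x : qvec n'.+1) : x j = 0 -> okb m (val j) x = okb m' (val j) (qres x).
Proof.
move=> xj; apply/forallP/forallP => h i.
  by rewrite ffunE /m' -lift_lt; apply: h.
case: (unliftP j i) => [i' ->|->].
  by have := h i'; rewrite ffunE /m' lift_lt.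
by rewrite xj eqxx ltxx.
Qed.

Lemma wsum_res (x : qvec n'.+1) : x j = 0 -> wsum m x = wsum m' (qres x).
Proof.
move=> xj; rewrite /wsum (bigD1_ord j) //= xj normr0 mul0r add0r.
by apply: eq_bigr => i _; rewrite ffunE.
Qed.

Lemma Pw_nonneg u : Pw m (val j) w u -> 0 <= u j.
Proof.
move=> /andP [/forallP /(_ j) /andP [_ /implyP h] _].
rewrite leNgt; apply/negP => hn; have := h; rewrite /zvec_to_q ffunE ltrz0 => /(_ hn).
by rewrite ltnn.
Qed.

Lemma Pw_step u : Pw m (val j).+1 w u =
  if 0 <= u j then Pw m (val j) w u else Pw m (val j) w (zflip u).
Proof.
rewrite /Pw zflipq wsum_flip; case: ifP => h.
  by rewrite ok_pos // /zvec_to_q ffunE ler0z.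
by rewrite ok_neg // /zvec_to_q ffunE ltrz0 ltNge h.
Qed.

Lemma zresK (u : zvec n'.+1) : u j = 0 -> zext (zres u) = u.
Proof.
move=> uj; apply/ffunP => k; rewrite !ffunE.
by case: (unliftP j k) => [i ->|->]; rewrite ?ffunE ?uj.
Qed.

Lemma zextK v : zres (zext v) = v.
Proof. by apply/ffunP => i; rewrite !ffunE liftK. Qed.

Lemma zext_j v : zext v j = 0.
Proof. by rewrite ffunE unlift_none. Qed.

Lemma Pw_res (u : zvec n'.+1) : u j = 0 -> Pw m (val j) w u = Pw m' (val j) w (zres u).
Proof.
move=> uj; have xj : zvec_to_q u j = 0 by rewrite ffunE uj.
by rewrite /Pw zresq ok_res // wsum_res.
Qed.

Lemma count_split (s : seq (zvec n'.+1)) : all (fun u : zvec n'.+1 => 0 <= u j) s ->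
  (count (fun u : zvec n'.+1 => (0 < u j)%R) s + count (fun u : zvec n'.+1 => u j == 0%R) s)%N = size s.
Proof.
elim: s => [|u s IH] //= /andP [h hs].
rewrite -IH // lt0r h andbT; case: eqP => _ /=; lia.
Qed.

End Main.

Lemma Ncard_of n V w (s : seq (zvec n)) (P : pred (zvec n)) :
  uniq s -> (forall u, (u \in s) = P u) ->
  (forall u, is_weight V (zvec_to_q u) w <-> P u) -> Ncard V w (size s).
Proof.
move=> us ms pw; exists s; split=> //; split=> // u.
by rewrite ms; split=> /pw.
Qed.

Theorem mainTheorem4 (n' : nat) (m : 'I_n'.+1 -> nat) (j : 'I_n'.+1) (w : rat) :
  0 <= w ->
  exists a b c : nat,
    Ncard (Gverts m (val j).+1) w a /\
    Ncard (Gverts m (val j)) w b /\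
    Ncard (Gverts (fun i : 'I_n' => m (lift j i)) (val j)) w c /\
    (a + c = 2 * b)%N.
Proof.
move=> w0.
have [S [uS mS]] := Pw_enum m (val j) w0.
have allS : all (fun u : zvec n'.+1 => 0 <= u j) S by apply/allP => u; rewrite mS; apply: Pw_nonneg.
pose A := S ++ map (zflip j) (filter (fun u : zvec n'.+1 => 0 < u j) S).
pose C := map (zres j) (filter (fun u : zvec n'.+1 => u j == 0) S).
exists (size A), (size S), (size C); split; last split; last split.
- apply: (Ncard_of (P := Pw m (val j).+1 w)) => [||u]; last exact: weight_iff.
  + rewrite cat_uniq uS map_inj_uniq ?filter_uniq //; last exact: can_inj (zflipK j).
    rewrite andbT; apply/hasPn => u /mapP [v]; rewrite mem_filter => /andP [vp _] ->.
    rewrite mS; apply/negP => /Pw_nonneg; rewrite ffunE eqxx oppr_ge0 leNgt vp.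
    by [].
  + move=> u; rewrite Pw_step mem_cat mS.
    have -> : (u \in map (zflip j) (filter (fun u : zvec n'.+1 => 0 < u j) S)) =
              (zflip j u \in filter (fun u : zvec n'.+1 => 0 < u j) S).
      by rewrite -{1}(zflipK j u) mem_map //; exact: can_inj (zflipK j).
    rewrite mem_filter mS ffunE eqxx oppr_gt0.
    case: ifP => h.
      by rewrite ltNge h /= orbF.
    have -> : Pw m (val j) w u = false.
      by apply/negP => /Pw_nonneg; rewrite h.
    by rewrite ltNge h.
- apply: (Ncard_of (P := Pw m (val j) w)) => [||u] //; last exact: weight_iff.
- apply: (Ncard_of (P := Pw (fun i : 'I_n' => m (lift j i)) (val j) w)) => [||v]; last exact: weight_iff.
  + rewrite map_inj_in_uniq ?filter_uniq // => u1 u2.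
    rewrite !mem_filter => /andP [/eqP h1 _] /andP [/eqP h2 _] e.
    by rewrite -(zresK h1) -(zresK h2) e.
  + move=> v; apply/idP/idP.
      move=> /mapP [u]; rewrite mem_filter mS => /andP [/eqP uj Pu] ->.
      by rewrite -Pw_res.
    move=> Pv; rewrite -(zextK j v); apply: map_f.
    rewrite mem_filter zext_j eqxx mS Pw_res ?zext_j //.
    by rewrite zextK.
- rewrite size_cat size_map size_map !size_filter -addnA count_split //.
  by rewrite mul2n addnn.
Qed.
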